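(* Suppose $\mu>1$. Then for every environment $i\in S$ there exists $m\ge1$ such that the total state $m.i$ is viable.
   Context: Let $S$ be a finite set and $P$ the transition matrix of an irreducible Markov chain on $S$ with stationary distribution $\pi$. For each $i\in S$ let $(R_{in})_{n\in\mathbb{N}}$ be a probability distribution on $\mathbb{N}$ with mean $\mu_i\le\infty$, and $\mu=\sum_i\pi_i\mu_i$. Let $(\xi_t^i)_{t\ge1,i\in S}$ be independent with $\mathbb{P}(\xi_t^i=n)=R_{in}$, let $(Q_t)_{t\ge0}$ be a Markov chain with transition matrix $P$ independent of the $\xi$'s, and $\xi_t=\sum_{i}\xi_t^i\mathbf{1}\{Q_t=i\}$. The $\mathbb{Z}$-valued process is $Y_{t+1}=Y_t-1+\xi_{t+1}$; $\mathbb{P}_{m.i}$ is its law started from $Y_0=m$, $Q_0=i$. Let $\tau=\inf\{t\ge1:Q_t=i\}$. The total state $m.i$ is viable if $\mathbb{P}_{m.i}(Y_\tau-Y_0\ge1\text{ and }Y_t\ge1\text{ for all }t\in[0,\tau])>0$. *)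

(* Defs.v *)
From HB Require Import structures.
From mathcomp Require Import all_boot all_order all_algebra.
From mathcomp Require Import all_classical all_reals.
From mathcomp Require Import ereal sequences esum.
Set Implicit Arguments. Unset Strict Implicit. Unset Printing Implicit Defensive.
Import Order.TTheory GRing.Theory Num.Theory.
Local Open Scope ring_scope.
Local Open Scope classical_set_scope.

Section MAP.
Variables (R : realType) (S : finType).

Definition stochastic (P : S -> S -> R) : Prop :=
  (forall i j, 0 <= P i j) /\ (forall i, \sum_(j : S) P i j = 1).

Fixpoint mpow (P : S -> S -> R) (n : nat) (i j : S) : R :=
  match n with
  | 0%N => (i == j)%:R
  | n'.+1 => \sum_(k : S) mpow P n' i k * P k j
  end.

Definition irreducible (P : S -> S -> R) : Prop :=
  forall i j : S, exists n : nat, 0 < mpow P n i j.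

Definition stationary (P : S -> S -> R) (pi : S -> R) : Prop :=
  [/\ forall i, 0 <= pi i, \sum_(i : S) pi i = 1
    & forall j, \sum_(i : S) pi i * P i j = pi j].

Definition prob_on_nat (Rd : nat -> R) : Prop :=
  (forall n, 0 <= Rd n) /\ (\sum_(n <oo) (Rd n)%:E = 1)%E.

Definition mean_nat (Rd : nat -> R) : \bar R :=
  (\sum_(n <oo) (n%:R * Rd n)%:E)%E.

Definition mu_total (pi : S -> R) (Rd : S -> nat -> R) : \bar R :=
  (\sum_(i : S) (pi i)%:E * mean_nat (Rd i))%E.

(* A finite trajectory of the process started at Q_0 = i0 is a list
   [:: (Q_1, xi_1); ...; (Q_k, xi_k)].  Its probability under P_{m.i0}
   is prod_{t=1}^k P(Q_{t-1},Q_t) * R_{Q_t}(xi_t)  (since xi_t = xi_t^{Q_t}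
   with xi_t^j independent of law R_j and independent of Q). *)
Fixpoint traj_weight (P : S -> S -> R) (Rd : S -> nat -> R) (q : S)
  (s : seq (S * nat)) : R :=
  match s with
  | [::] => 1
  | (q', x) :: s' => P q q' * Rd q' x * traj_weight P Rd q' s'
  end.

(* Y_t along the trajectory: Y_0 = m, Y_t = m + sum_{s<=t} (xi_s - 1) *)
Definition Ytraj (m : int) (s : seq (S * nat)) (t : nat) : int :=
  m + \sum_(j < t) ((nth 0%N (map snd s) j)%:Z - 1).

(* Q_t along the trajectory, for 1 <= t <= size s *)
Definition Qtraj (i0 : S) (s : seq (S * nat)) (t : nat) : S :=
  nth i0 (map fst s) t.-1.

(* The trajectory s (of length k = tau) realises the event
   {Y_tau - Y_0 >= 1 and Y_t >= 1 for all t in [0,tau]},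
   where tau = inf {t >= 1 : Q_t = i0}. *)
Definition good_traj (i0 : S) (m : int) (s : seq (S * nat)) : Prop :=
  [/\ (0 < size s)%N,
      Qtraj i0 s (size s) = i0,
      forall t, (0 < t < size s)%N -> Qtraj i0 s t != i0,
      forall t, (t <= size s)%N -> 1 <= Ytraj m s t
    & 1 <= Ytraj m s (size s) - m].

(* P_{m.i}(Y_tau - Y_0 >= 1 and Y_t >= 1 for all t in [0,tau]):
   the event is the disjoint union of the cylinders of its trajectories
   up to the stopping time tau. *)
Definition viable_prob (P : S -> S -> R) (Rd : S -> nat -> R) (m : int)
  (i : S) : \bar R :=
  (\esum_(s in [set s | good_traj i m s]) (traj_weight P Rd i s)%:E)%R.

Definition viable (P : S -> S -> R) (Rd : S -> nat -> R) (m : int) (i : S)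
  : Prop := (0 < viable_prob P Rd m i)%E.

End MAP.

(* Main.v *)
Require Import Defs.
From HB Require Import structures.
From mathcomp Require Import all_boot all_order all_algebra.
From mathcomp Require Import all_classical all_reals.
From mathcomp Require Import ereal sequences esum.
From mathcomp Require Import ring lra zify.
Set Implicit Arguments. Unset Strict Implicit. Unset Printing Implicit Defensive.
Import Order.TTheory GRing.Theory Num.Theory.
Local Open Scope ring_scope.

Section Comb.
Variables (R : realType) (S : finType) (P : S -> S -> R).
Hypothesis Pst : stochastic P.
Hypothesis Pirr : irreducible P.
Definition e : rel S := fun a b => 0 < P a b.

Lemma mpow_ge0 n a b : 0 <= mpow P n a b.
Proof.
elim: n b => [|n IH] b /=; first by rewrite ler0n.
apply: sumr_ge0 => k _; apply: mulr_ge0 => //; exact: Pst.1.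
Qed.

Lemma pos_term (F : S -> R) : (forall k, 0 <= F k) -> 0 < \sum_k F k ->
  exists k, 0 < F k.
Proof.
move=> F0 H; case: (pickP (fun k => 0 < F k)) => [k Hk|H0]; first by exists k.
move: H; rewrite big1 ?ltxx // => k _.
by apply/eqP; rewrite eq_le F0 andbT; move: (H0 k) => /= /negbT; rewrite -leNgt.
Qed.

Lemma walk_of n a b : 0 < mpow P n a b -> exists s, path e a s /\ last a s = b.
Proof.
elim: n b => [|n IH] b /=.
  by case: eqP => [->|]; [exists [::] | rewrite ltxx].
move=> H.
have [k Hk] := pos_term (fun k => mulr_ge0 (mpow_ge0 n a k) (Pst.1 k b)) H.
have Hx : 0 < mpow P n a k.
  by rewrite lt_def mpow_ge0 andbT; apply: contraTneq Hk => ->; rewrite mul0r ltxx.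
have Hy : 0 < P k b.
  by rewrite lt_def Pst.1 andbT; apply: contraTneq Hk => ->; rewrite mulr0 ltxx.
have [s [ps ls]] := IH _ Hx.
exists (rcons s b); rewrite rcons_path ps ls last_rcons; split => //.
Qed.

Lemma succ_of a : exists b, e a b.
Proof.
have H : 0 < \sum_k P a k by rewrite Pst.2 ltr01.
have [b Hb] := pos_term (Pst.1 a) H.
by exists b.
Qed.

Variable i : S.

Lemma cut_first s k : path e k s -> i \in s ->
  exists t, i \notin t /\ path e k (rcons t i).
Proof.
elim: s k => [|a s IH] k //= /andP [eka ps].
rewrite in_cons; case: (eqVneq i a) => [ia _|ia /= His].
  by exists [::]; rewrite /= ia eka.
have [t [it pt]] := IH _ ps His.
exists (a :: t); rewrite in_cons (negbTE ia) it /= eka pt; split => //.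
Qed.

Lemma cut_last s a k : path e a s -> last a s = k -> k != i ->
  (a == i) || (i \in s) ->
  exists p, i \notin p /\ path e i p /\ last i p = k.
Proof.
elim: s a => [|b s IH] a /=.
  by move=> _ -> /negbTE ->.
move=> /andP [eab ps] ls ki.
case His: (i \in s).
  by move=> _; apply: (IH b) => //; rewrite His orbT.
case: (eqVneq b i) => [bi|bi].
  by move=> _; apply: (IH b) => //; rewrite bi eqxx.
rewrite in_cons (eq_sym i b) (negbTE bi) His /= !orbF => /eqP ai.
rewrite ai in eab.
exists (b :: s); rewrite in_cons (eq_sym i b) (negbTE bi) His /= eab ps; split => //.
Qed.

Lemma taboo_exists k : exists t, i \notin t /\ path e k (rcons t i).
Proof.
have [l kl] := succ_of k.
have [n Hn] := Pirr l i.
have [s [ps ls]] := walk_of Hn.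
apply: (cut_first (s := l :: s)); first by rewrite /= kl ps.
by rewrite -ls mem_last.
Qed.

Lemma prefix_exists k : k != i -> exists p, i \notin p /\ path e i p /\ last i p = k.
Proof.
move=> ki; have [n Hn] := Pirr i k.
have [s [ps ls]] := walk_of Hn.
by apply: (cut_last ps ls ki); rewrite eqxx.
Qed.

Variables (pi : S -> R) (w : S -> R).
Hypothesis pist : stationary P pi.

Definition W (a : S) (t : seq S) : R := w a + \sum_(q <- t) w q.
Definition taboo k (t : seq S) := i \notin t /\ path e k (rcons t i).

Local Open Scope classical_set_scope.

Lemma key : 0 < \sum_j pi j * w j -> exists t, taboo i t /\ 0 < W i t.
Proof.
move=> Hc.
case: (pselect (exists t : seq S, taboo i t /\ 0 < W i t)) => // Hno.
have Hneg : forall t : seq S, taboo i t -> W i t <= 0.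
  by move=> t Ht; rewrite leNgt; apply/negP => H; apply: Hno; exists t.
pose T k := [set W k t | t in [set t : seq S | taboo k t]].
have ne k : T k !=set0.
  have [t Ht] := taboo_exists k; exists (W k t); exists t => //.
have ub k : k != i -> has_ubound (T k).
  move=> ki; have [p [ip [pp lp]]] := prefix_exists ki.
  exists (w k - w i - \sum_(q <- p) w q) => _ [t [it pt] <-].
  have : W i (p ++ t) <= 0.
    apply: Hneg; split; first by rewrite mem_cat negb_or ip it.
    by rewrite rcons_cat cat_path pp lp pt.
  rewrite /W big_cat /=; lra.
pose h k := if k == i then 0 else sup (T k).
have upper k t : k != i -> taboo k t -> W k t <= h k.
  move=> ki Ht; rewrite /h (negbTE ki); apply: ub_le_sup; first exact: ub.
  by exists t.
have suple k b : k != i -> (forall t, taboo k t -> W k t <= b) -> h k <= b.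
  move=> ki Hb; rewrite /h (negbTE ki); apply: ge_sup => // _ [t Ht <-].
  exact: Hb.
have tcons j k t : k != i -> e j k -> taboo k t -> taboo j (k :: t).
  move=> ki ejk [it pt]; split; first by rewrite in_cons negb_or eq_sym ki it.
  by rewrite rcons_cons /= ejk pt.
have Wcons j k t : W j (k :: t) = w j + W k t.
  by rewrite /W big_cons.
have edge j k : e j k -> w j <= h j - h k.
  move=> ejk; case: (eqVneq j i) => [ji|ji]; case: (eqVneq k i) => [ki|ki].
  - subst j k.
    have : W i [::] <= 0.
      by apply: Hneg; split => //=; rewrite andbT.
    by rewrite /h eqxx /W big_nil; lra.
  - subst j.
    have : h k <= - w i.
      apply: suple => // t Ht.
      have : W i (k :: t) <= 0 by apply: Hneg; exact: tcons.
      rewrite Wcons; lra.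
    by rewrite /h eqxx; lra.
  - subst k.
    have : W j [::] <= h j.
      by apply: upper => //; split => //=; rewrite andbT.
    by rewrite /h eqxx /W big_nil; lra.
  - have : h k <= h j - w j.
      apply: suple => // t Ht.
      have : W j (k :: t) <= h j by apply: upper => //; exact: tcons.
      rewrite Wcons; lra.
    lra.
have term j k : pi j * P j k * w j <= pi j * P j k * (h j - h k).
  have pj : 0 <= pi j * P j k.
    by apply: mulr_ge0; [case: pist | exact: Pst.1].
  case: (boolP (e j k)) => [ejk|nejk]; first by apply: ler_wpM2l => //; exact: edge.
  have -> : P j k = 0.
    by apply/eqP; rewrite eq_le Pst.1 andbT leNgt.
  by rewrite mulr0 !mul0r.
have : \sum_j pi j * w j <= 0.
  have E1 : \sum_j pi j * w j = \sum_j \sum_k pi j * P j k * w j.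
    apply: eq_bigr => j _.
    rewrite -[LHS]mulr1 -(Pst.2 j) mulr_sumr; apply: eq_bigr => k _.
    by rewrite mulrC; ring.
  have E2 : \sum_j \sum_k pi j * P j k * (h j - h k) = 0.
    have E3 : \sum_j \sum_k pi j * P j k * h j = \sum_j pi j * h j.
      apply: eq_bigr => j _; rewrite -mulr_suml -mulr_sumr Pst.2 mulr1 //.
    have E4 : \sum_j \sum_k pi j * P j k * h k = \sum_k pi k * h k.
      rewrite exchange_big; apply: eq_bigr => k _.
      rewrite -mulr_suml; case: pist => _ _ ->; done.
    under eq_bigr do under eq_bigr do rewrite mulrBr.
    under eq_bigr do rewrite sumrB.
    by rewrite sumrB E3 E4 subrr.
  rewrite E1 -[X in _ <= X]E2; apply: ler_sum => j _; apply: ler_sum => k _; exact: term.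
lra.
Qed.

End Comb.
Section Anal.
Variables (R : realType) (S : finType) (pi : S -> R) (Rd : S -> nat -> R).
Hypothesis pi0 : forall j, 0 <= pi j.
Hypothesis pi1 : \sum_j pi j = 1.
Hypothesis Rdp : forall j, prob_on_nat (Rd j).

Lemma supp_ex j : exists n, 0 < Rd j n.
Proof.
case: (pselect (exists n, 0 < Rd j n)) => // H; exfalso.
have [R0 R1] := Rdp j.
have : (\sum_(n <oo) (Rd j n)%:E = 0)%E.
  apply: eseries0 => n _ _; congr (_%:E).
  apply/eqP; rewrite eq_le R0 andbT leNgt; apply/negP => Hn; apply: H; by exists n.
by rewrite R1 => /eqP; rewrite eqe oner_eq0.
Qed.

Lemma mean_le j (x : nat) : (forall n, 0 < Rd j n -> (n <= x)%N) ->
  (mean_nat (Rd j) <= (x%:R)%:E)%E.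
Proof.
move=> Hx; have [R0 R1] := Rdp j.
rewrite /mean_nat.
apply: (@le_trans _ _ (\sum_(n <oo) ((x%:R : R)%:E * (Rd j n)%:E))%E).
  apply: lee_nneseries => [n _ _|n _].
    by rewrite lee_fin; apply: mulr_ge0 => //; rewrite ler0n.
  rewrite -EFinM lee_fin; case: (boolP (0 < Rd j n)) => [Hn|Hn].
    by apply: ler_wpM2r => //; rewrite ler_nat; exact: Hx.
  have -> : Rd j n = 0 by apply/eqP; rewrite eq_le R0 andbT leNgt.
  by rewrite !mulr0.
rewrite nneseriesZl; last by move=> n _; rewrite lee_fin.
by rewrite R1 mule1.
Qed.

Lemma choose_x : (1 < mu_total pi Rd)%E ->
  exists x : S -> nat, (forall j, 0 < Rd j (x j)) /\ 1 < \sum_j pi j * (x j)%:R.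
Proof.
move=> Hmu.
have [y Hy] := choice supp_ex.
case: (pselect (exists j, 0 < pi j /\ forall N, exists n, (N <= n)%N /\ 0 < Rd j n)).
  move=> [j [pj Hunb]].
  have [n [Nn Hn]] := Hunb (Num.truncn (pi j)^-1).+1.
  exists (fun k => if k == j then n else y k); split.
    by move=> k; case: eqP => [->|]; [exact: Hn | move=> _; exact: Hy].
  rewrite (bigD1 j) //= eqxx.
  apply: (@lt_le_trans _ _ (pi j * n%:R)).
    apply: (@lt_le_trans _ _ (pi j * (Num.truncn (pi j)^-1).+1%:R)).
      have h1 := truncnS_gt (pi j)^-1.
      by rewrite -(ltr_pM2l pj) mulfV ?lt0r_neq0 in h1.
    by apply: ler_wpM2l; [exact: ltW | rewrite ler_nat].
  rewrite lerDl; apply: sumr_ge0 => k _; apply: mulr_ge0 => //; exact: ler0n.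
move=> Hb.
have Hx : forall j, exists xj, 0 < Rd j xj /\
    (0 < pi j -> (mean_nat (Rd j) <= (xj%:R)%:E)%E).
  move=> j; case: (boolP (0 < pi j)) => [pj|pj]; last first.
    by exists (y j); split => //; rewrite (negbTE pj).
  have [M HM] : exists M, forall n, (M <= n)%N -> ~~ (0 < Rd j n).
    case: (pselect (exists M, forall n, (M <= n)%N -> ~~ (0 < Rd j n))) => // HH.
    exfalso; apply: Hb; exists j; split => // N.
    case: (pselect (exists n, (N <= n)%N /\ 0 < Rd j n)) => // HN.
    exfalso; apply: HH; exists N => n Nn; apply/negP => Hn; apply: HN; by exists n.
  have ub : forall n, 0 < Rd j n -> (n <= M)%N.
    move=> n Hn; rewrite leqNgt; apply/negP => Mn.
    by move: (HM n (ltnW Mn)); rewrite Hn.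
  case: (ex_maxnP (supp_ex j) ub) => xj Hxj Hmax.
  by exists xj; split => // _; apply: mean_le.
have [x Hxx] := choice Hx.
exists x; split; first by move=> j; case: (Hxx j).
rewrite -lte_fin; apply: (lt_le_trans Hmu).
rewrite /mu_total -sumEFin; apply: lee_sum => j _.
case: (Hxx j) => _ Hm.
case: (boolP (0 < pi j)) => [pj|pj].
  by rewrite EFinM; apply: lee_wpmul2l; [rewrite lee_fin; exact: ltW | exact: Hm].
have -> : pi j = 0 by apply/eqP; rewrite eq_le pi0 andbT leNgt.
by rewrite mul0e mul0r.
Qed.
End Anal.

Lemma cast_sum (R : realType) (S : finType) (x : S -> nat) (r : seq S) :
  ((\sum_(q <- r) ((x q)%:Z - 1))%:~R : R) = \sum_(q <- r) ((x q)%:R - 1).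
Proof.
elim: r => [|a r IH]; first by rewrite !big_nil.
by rewrite !big_cons intrD IH intrB.
Qed.

Lemma traj_pos (R : realType) (S : finType) (P : S -> S -> R) (Rd : S -> nat -> R)
  (x : S -> nat) : (forall q, 0 < Rd q (x q)) ->
  forall r a, path (e P) a r -> 0 < traj_weight P Rd a (map (fun q => (q, x q)) r).
Proof.
move=> Hx; elim => [|b r IH] a /=; first by rewrite ltr01.
move=> /andP [eab pr]; apply: mulr_gt0; last exact: IH.
by apply: mulr_gt0.
Qed.

Theorem mainTheorem4 (R : realType) (S : finType)
  (P : S -> S -> R) (pi : S -> R) (Rd : S -> nat -> R) :
  stochastic P -> irreducible P -> stationary P pi ->
  (forall i, prob_on_nat (Rd i)) ->
  (1 < mu_total pi Rd)%E ->
  forall i : S, exists m : int, 1 <= m /\ viable P Rd m i.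
Proof.
move=> Pst Pirr pist Rdp Hmu i.
have pist' := pist; case: pist' => pi0 pi1 _.
have [x [Hx Hsum]] := choose_x pi0 Rdp Hmu.
pose w j : R := (x j)%:R - 1.
have Hw : 0 < \sum_j pi j * w j.
  have -> : \sum_j pi j * w j = \sum_j pi j * (x j)%:R - \sum_j pi j.
    rewrite -sumrB; apply: eq_bigr => j _; rewrite /w; ring.
  by rewrite pi1 subr_gt0.
have [t [[it pt] Wpos]] := @key R S P Pst Pirr i pi w pist Hw.
pose r := rcons t i.
pose s := map (fun q => (q, x q)) r.
have Hfst : map fst s = r by rewrite /s; elim: (r) => //= a l ->.
have Hsnd : map snd s = map x r by rewrite /s; elim: (r) => //= a l ->.
have Hsz : size s = (size t).+1 by rewrite size_map size_rcons.
exists ((size s)%:Z + 1); split; first by lia.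
rewrite /viable /viable_prob.
apply: (@lt_le_trans _ _ (traj_weight P Rd i s)%:E).
  rewrite lte_fin; exact: traj_pos.
apply: esum_ge; exists [set s]%classic; last by rewrite fsbig_set1.
split; first exact: finite_set1.
move=> _ ->; rewrite /good_traj; split.
- by rewrite Hsz.
- by rewrite /Qtraj Hfst Hsz /= /r nth_rcons ltnn eqxx.
- move=> k /andP [k0 ks]; rewrite /Qtraj Hfst /r nth_rcons.
  have kt : (k.-1 < size t)%N by move: ks; rewrite Hsz; case: (k) k0.
  rewrite kt; apply: contraNneq it => <-; exact: mem_nth.
- move=> k ks; rewrite /Ytraj.
  have : - (k%:Z) <= \sum_(j < k) ((nth 0%N (map snd s) j)%:Z - 1).
    have -> : - (k%:Z) = \sum_(j < k) (-1 : int).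
      by rewrite sumr_const card_ord mulNrn natz.
    by apply: ler_sum => j _; lia.
  move: ks; lia.
- rewrite /Ytraj addrAC subrr add0r.
  have -> : \sum_(j < size s) ((nth 0%N (map snd s) j)%:Z - 1) =
            \sum_(q <- r) ((x q)%:Z - 1).
    rewrite Hsnd -(big_map x xpredT (fun v => v%:Z - 1)).
    by rewrite (big_nth 0%N) big_mkord size_map /s size_map.
  rewrite -gtz0_ge1 -(ltr0z R) cast_sum /r big_rcons /=.
  move: Wpos; rewrite /W /w; lra.
Qed.
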